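(* Let $n\ge3$, $k\ge1$ be integers, $\alpha=n/2-1$, and let $b>0>c$ be real numbers satisfying $$bc=-\frac{(k+1)k(\alpha+k-1)}{(2\alpha+k)(2\alpha+k-1)(\alpha+k+1)},\qquad b+c=-\frac{2\alpha(k+1)^2(\alpha+k-1)}{(2\alpha+k)(2\alpha+k-1)(\alpha+2k+1)}.$$ Then $$q_{k+1}(t):=P_{k+1}^{(n)}(t)+bP_{k-1}^{(n)}(t)=\frac{(\alpha)_{k+1}2^{k+1}}{(2\alpha)_{k+1}}(t-\beta_1)\cdots(t-\beta_{k+1}),$$ where $\beta_1,\dots,\beta_{k+1}$ are distinct, lie in $(-1,1)$, and the set $\{\beta_1,\dots,\beta_{k+1}\}$ is symmetric about the origin.
   Context: $P_i^{(n)}$ is the Gegenbauer polynomial of degree $i$, i.e. the Jacobi polynomial with parameters $(n-3)/2,(n-3)/2$ normalized so that $P_i^{(n)}(1)=1$ ($P_0^{(n)}=1$). $(x)_m=x(x+1)\cdots(x+m-1)$ is the Pochhammer symbol. *)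

(* Defs.v *)
From HB Require Import structures.
From mathcomp Require Import all_boot all_order all_algebra.
From mathcomp Require Import reals.
Set Implicit Arguments. Unset Strict Implicit. Unset Printing Implicit Defensive.
Import Order.TTheory GRing.Theory Num.Theory.
Local Open Scope ring_scope.

Section Gegen.
Variable R : realType.

(* gegen_pair n i = (P_i^{(n)}, P_{i+1}^{(n)}), computed with the standard
   three-term recurrence of the Gegenbauer polynomials normalized by P(1) = 1:
     P_0 = 1, P_1 = t,
     (i + n - 2) P_{i+1} = (2 i + n - 2) t P_i - i P_{i-1}. *)
Fixpoint gegen_pair (n i : nat) : {poly R} * {poly R} :=
  match i with
  | 0 => (1, 'X)
  | i'.+1 =>
      let pq := gegen_pair n i' in
      (pq.2,
       ((i' + n - 1)%:R)^-1 *: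
         ((2 * i' + n)%:R *: ('X * pq.2) - (i'.+1)%:R *: pq.1))
  end.

Definition gegen (n i : nat) : {poly R} := (gegen_pair n i).1.

Definition poch (x : R) (m : nat) : R := \prod_(i < m) (x + i%:R).

End Gegen.

(* Main.v *)
Set Warnings "-notation-overridden,-ambiguous-paths,-notation-incompatible-prefix".
Require Import Defs.
From HB Require Import structures.
From mathcomp Require Import all_boot all_order all_algebra.
From mathcomp Require Import reals.
From mathcomp Require Import polyrcf.
From mathcomp Require Import ring lra zify.
Import Order.TTheory GRing.Theory Num.Theory.
Local Open Scope ring_scope.
Set Implicit Arguments. Unset Strict Implicit.
Section Core.
Variable R : realType.

Lemma sign_sq (a : nat) : (-1) ^+ a * (-1) ^+ a = 1 :> R.
Proof. by rewrite -exprMn mulrNN mulr1 expr1n. Qed.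

Lemma sign_S (a : nat) : (-1) ^+ a.+1 = - (-1) ^+ a :> R.
Proof. by rewrite exprS mulN1r. Qed.

Lemma prod_sign (r : nat -> R) (y : R) (i m : nat) :
  (m <= i)%N ->
  (forall j, (j < m)%N -> r j < y) ->
  (forall j, (m <= j < i)%N -> y < r j) ->
  0 < (-1) ^+ (i - m) * \prod_(j < i) (y - r j).
Proof.
elim: i m => [|i IH] m.
  by rewrite leqn0 => /eqP -> _ _; rewrite big_ord0 mulr1 expr0 ltr01.
move=> lemi Hlo Hhi; rewrite big_ord_recr /=.
have [Em|ltmi] := eqVneq m i.+1.
  subst m; rewrite subnn expr0 mul1r; apply: mulr_gt0.
    apply: prodr_gt0 => j _; rewrite subr_gt0; apply: Hlo; have := ltn_ord j; lia.
  by rewrite subr_gt0; apply: Hlo.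
have lemi' : (m <= i)%N by lia.
have H1 := IH m lemi' Hlo (fun j hj => Hhi j (ltac:(lia))).
have H2 : y - r i < 0 by rewrite subr_lt0; apply: Hhi; lia.
have -> : (i.+1 - m = (i - m).+1)%N by lia.
rewrite sign_S.
set e := (-1) ^+ (i - m); set P := \prod_(j < i) (y - r j).
have -> : - e * (P * (y - r i)) = (e * P) * (r i - y) by ring.
apply: mulr_gt0 => //; lra.
Qed.

Lemma fun_choice (K : nat) (Pm : nat -> R -> Prop) :
  (forall m, (m < K)%N -> exists y, Pm m y) ->
  exists f : nat -> R, forall m, (m < K)%N -> Pm m (f m).
Proof.
elim: K => [|K IH] H; first by exists (fun _ => 0).
have [f Hf] := IH (fun m hm => H m (ltnW hm)).
have [y Hy] := H K (ltnSn K).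
exists (fun m => if m == K then y else f m) => m hm.
case: eqP => [->//|/eqP ne]; apply: Hf; lia.
Qed.

End Core.
Section Step.
Variable R : realType.

Definition Good (P Q : {poly R}) (r : nat -> R) (i : nat) : Prop :=
  [/\ forall j1 j2, (j1 < j2)%N -> (j2 < i)%N -> r j1 < r j2,
      forall j, (j < i)%N -> -1 < r j /\ r j < 1,
      forall j, (j < i)%N -> root P (r j),
      size P = i.+1 /\ 0 < lead_coef P &
      forall j, (j < i)%N -> 0 < (-1) ^+ (i - 1 - j) * Q.[r j]].

Lemma mkseq_uniq_in (r : nat -> R) i :
  (forall j1 j2, (j1 < j2)%N -> (j2 < i)%N -> r j1 < r j2) ->
  uniq (mkseq r i).
Proof.
move=> Hinc; rewrite /mkseq map_inj_in_uniq ?iota_uniq //.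
move=> a b; rewrite !mem_iota !add0n => /andP[_ ha] /andP[_ hb] E.
case: (ltngtP a b) => // h.
  by have := Hinc a b h hb; rewrite E ltxx.
by have := Hinc b a h ha; rewrite E ltxx.
Qed.

Lemma factor (P : {poly R}) (r : nat -> R) i :
  (forall j1 j2, (j1 < j2)%N -> (j2 < i)%N -> r j1 < r j2) ->
  (forall j, (j < i)%N -> root P (r j)) -> size P = i.+1 ->
  P = lead_coef P *: \prod_(x <- mkseq r i) ('X - x%:P).
Proof.
move=> Hinc Hroot HsP.
have U := mkseq_uniq_in Hinc.
have A : all (root P) (mkseq r i).
  apply/allP => x /mapP [j]; rewrite mem_iota add0n => /andP[_ hj] ->.
  exact: Hroot.
have [q Hq] := uniq_roots_prod_XsubC A (ltac:(by rewrite uniq_rootsE)).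
have Pn0 : P != 0 by rewrite -size_poly_eq0 HsP.
have pn0 : \prod_(x <- mkseq r i) ('X - x%:P) != 0.
  by rewrite -size_poly_eq0 size_prod_XsubC.
have qn0 : q != 0 by apply: contraNneq Pn0 => q0; rewrite Hq q0 mul0r.
have sq : size q = 1%N.
  move: HsP; rewrite Hq size_mul // size_prod_XsubC size_mkseq.
  rewrite addnS /= => h; by apply/eqP; rewrite -(eqn_add2r i) h add1n.
have Eq : q = (q`_0)%:P by apply: size1_polyC; rewrite sq.
move: Eq; set c := q`_0 => Eq.
have EP : P = c *: \prod_(x <- mkseq r i) ('X - x%:P) by rewrite Hq Eq mul_polyC.
by rewrite {2}EP lead_coefZ lead_coef_prod_XsubC mulr1.
Qed.

Lemma factor_horner (P : {poly R}) (r : nat -> R) i y :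
  (forall j1 j2, (j1 < j2)%N -> (j2 < i)%N -> r j1 < r j2) ->
  (forall j, (j < i)%N -> root P (r j)) -> size P = i.+1 ->
  P.[y] = lead_coef P * \prod_(j < i) (y - r j).
Proof.
move=> Hinc Hroot HsP; rewrite {1}(factor Hinc Hroot HsP) hornerZ horner_prod.
rewrite /mkseq big_map.
have -> : iota 0 i = index_iota 0 i by rewrite /index_iota subn0.
rewrite big_mkord; congr (_ * _); apply: eq_bigr => j _.
by rewrite hornerXsubC.
Qed.

Lemma step (P Q N : {poly R}) (r : nat -> R) (i : nat) (g : R) :
  Good P Q r i -> 0 < g ->
  (forall j, (j < i)%N -> N.[r j] = - g * Q.[r j]) ->
  size N = i.+2 -> 0 < lead_coef N -> 0 < N.[1] -> 0 < (-1) ^+ i.+1 * N.[-1] ->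
  exists r', Good N P r' i.+1.
Proof.
case=> Hinc Hbd Hroot [HsP HlP] Halt Hg HN HsN HlN H1 Hm1.
pose t m := if m == 0%N then -1 else if (m <= i)%N then r m.-1 else 1.
have tr : forall j, (j < i)%N -> t j.+1 = r j by move=> j hj; rewrite /t /= hj.
have t0 : t 0%N = -1 by [].
have ti : t i.+1 = 1 by rewrite /t /= ltnn.
have Tlt : forall m1 m2, (m1 < m2)%N -> (m2 <= i.+1)%N -> t m1 < t m2.
  move=> m1 m2 lt12 le2; rewrite /t.
  have -> : (m2 == 0%N) = false by apply/eqP; lia.
  have [E1|m1n0] := eqVneq m1 0%N.
    case: (leqP m2 i) => h2; last lra.
    by have [? ?] := Hbd m2.-1 ltac:(lia).
  have -> : (m1 <= i)%N = true by lia.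
  case: (leqP m2 i) => h2; first by apply: Hinc; lia.
  by have [? ?] := Hbd m1.-1 ltac:(lia).
have Tle : forall m1 m2, (m1 <= m2)%N -> (m2 <= i.+1)%N -> t m1 <= t m2.
  move=> m1 m2 le12 le2; case: (ltngtP m1 m2) => h.
  - exact/ltW/Tlt.
  - lia.
  - by rewrite h.
have T1 : forall m, (m <= i.+1)%N -> 0 < (-1) ^+ (i.+1 - m) * N.[t m].
  move=> m hm; case: (m =P 0%N) => [->|mn0]; first by rewrite subn0.
  case: (leqP m i) => hmi.
    have -> : t m = r m.-1 by rewrite /t; case: eqP => // _; rewrite hmi.
    rewrite HN; last lia.
    have := Halt m.-1 ltac:(lia).
    have -> : (i.+1 - m = (i - 1 - m.-1).+1)%N by lia.
    rewrite sign_S; set e := (-1) ^+ _; set q := Q.[_] => h.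
    have -> : - e * (- g * q) = g * (e * q) by ring.
    exact: mulr_gt0.
  have -> : m = i.+1 by lia.
  by rewrite subnn expr0 mul1r ti.
have Hex : forall m, (m < i.+1)%N ->
    exists y, (t m < y /\ y < t m.+1) /\ root N y.
  move=> m hm; have h1 := T1 m ltac:(lia); have h2 := T1 m.+1 ltac:(lia).
  have lt := Tlt m m.+1 (ltnSn m) ltac:(lia).
  have hneg : N.[t m] * N.[t m.+1] < 0.
    move: h1 h2; rewrite subSS.
    have -> : (i.+1 - m = (i - m).+1)%N by lia.
    rewrite sign_S; have := sign_sq R (i - m).
    set e := (-1) ^+ _; set a := N.[_]; set b := N.[_] => ee h1 h2.
    have := mulr_gt0 h1 h2.
    have -> : - e * a * (e * b) = - (e * e) * (a * b) by ring.
    rewrite ee; lra.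
  have [y] := poly_ivtoo (ltW lt) hneg.
  rewrite in_itv /= => /andP[ya yb] ry.
  by exists y.
have [r' Hr'] := fun_choice Hex.
exists r'; split.
- move=> j1 j2 h12 h2.
  have [[a1 b1] _] := Hr' j1 ltac:(lia); have [[a2 b2] _] := Hr' j2 h2.
  have := Tle j1.+1 j2 ltac:(lia) ltac:(lia); lra.
- move=> j hj; have [[a b] _] := Hr' j hj.
  have := Tle 0%N j ltac:(lia) ltac:(lia); have := Tle j.+1 i.+1 hj (leqnn _).
  rewrite t0 ti; lra.
- by move=> j hj; have [_ ?] := Hr' j hj.
- by [].
move=> m hm; have [[ya yb] _] := Hr' m hm.
rewrite (factor_horner _ Hinc Hroot HsP).
have -> : (i.+1 - 1 - m = i - m)%N by lia.
rewrite mulrCA; apply: mulr_gt0 => //; apply: prod_sign.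
- lia.
- move=> j hj; rewrite -tr; last lia.
  have := Tle j.+1 m ltac:(lia) ltac:(lia); lra.
- move=> j /andP[h1 h2]; rewrite -tr //.
  have := Tle m.+1 j.+1 ltac:(lia) ltac:(lia); lra.
Qed.

End Step.
Unset Implicit Arguments.
Section Gegen.
Variable R : realType.
Variable n : nat.
Hypothesis hn : (3 <= n)%N.

Lemma G0 : gegen R n 0 = 1. Proof. by []. Qed.
Lemma G1 : gegen R n 1 = 'X. Proof. by []. Qed.
Lemma GSS i : gegen R n i.+2 = ((i + n - 1)%:R)^-1 *:
   ((2 * i + n)%:R *: ('X * gegen R n i.+1) - (i.+1)%:R *: gegen R n i).
Proof. by []. Qed.

Lemma natd i : ((i + n - 1)%:R : R) = i%:R + n%:R - 1.
Proof. by rewrite natrB ?natrD //; lia. Qed.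
Lemma natA i : ((2 * i + n)%:R : R) = 2 * i%:R + n%:R.
Proof. by rewrite natrD natrM. Qed.
Lemma natS i : ((i.+1)%:R : R) = i%:R + 1.
Proof. by rewrite -addn1 natrD. Qed.
Lemma nge3 : (3 : R) <= n%:R.
Proof. by rewrite ler_nat. Qed.
Lemma dpos i : (0 : R) < (i + n - 1)%:R.
Proof. rewrite ltr0n; lia. Qed.

Lemma gegen_ev1 i : (gegen R n i).[1] = 1 /\ (gegen R n i.+1).[1] = 1.
Proof.
elim: i => [|i [IH1 IH2]]; first by rewrite G0 G1 hornerC hornerX.
split => //; rewrite GSS !(hornerZ, hornerD, hornerN, hornerM, hornerX) IH1 IH2.
have := dpos i; rewrite natd natA natS => hd.

by field; lra.
Qed.

Lemma gegen_odd t i : (gegen R n i).[- t] = (-1) ^+ i * (gegen R n i).[t] /\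
  (gegen R n i.+1).[- t] = (-1) ^+ i.+1 * (gegen R n i.+1).[t].
Proof.
elim: i => [|i [IH1 IH2]].
  by rewrite G0 G1 !hornerC !hornerX expr0 mul1r expr1 mulN1r.
split => //; rewrite !GSS !(hornerZ, hornerD, hornerN, hornerM, hornerX) IH1 IH2 !exprS; ring.
Qed.

End Gegen.
Section Lead.
Variable R : realType.
Variable n : nat.
Hypothesis hn : (3 <= n)%N.

Definition Lc (i : nat) : R :=
  poch (n%:R / 2 - 1) i * 2 ^+ i / poch (2 * (n%:R / 2 - 1)) i.

Lemma pochS (x : R) m : poch x m.+1 = poch x m * (x + m%:R).
Proof. by rewrite /poch big_ord_recr. Qed.

Lemma poch_gt0 (x : R) m : 0 < x -> 0 < poch x m.
Proof.
move=> hx; apply: prodr_gt0 => j _; have := ler0n R j; lra.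
Qed.

Lemma Lc_gt0 i : 0 < Lc i.
Proof.
have h3 := nge3 R n hn.
rewrite /Lc; apply: divr_gt0; last by apply: poch_gt0; lra.
by apply: mulr_gt0; [apply: poch_gt0; lra | apply: exprn_gt0].
Qed.

Lemma gegen_sl i :
  (size (gegen R n i) = i.+1 /\ lead_coef (gegen R n i) = Lc i) /\
  (size (gegen R n i.+1) = i.+2 /\ lead_coef (gegen R n i.+1) = Lc i.+1).
Proof.
have h3 := nge3 R n hn.
elim: i => [|i [[S0 L0] [S1 L1]]].
  rewrite G0 G1 size_poly1 size_polyX lead_coef1 lead_coefX /Lc.
  rewrite !pochS /poch !big_ord0 !mul1r addr0 invr1 expr1.
  split => //; split => //; field; lra.
split => //.
have P1n0 : gegen R n i.+1 != 0 by rewrite -size_poly_eq0 S1.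
have hd := dpos R n hn i.
have hA : ((2 * i + n)%:R : R) != 0 by rewrite pnatr_eq0; lia.
have hd0 : ((i + n - 1)%:R : R)^-1 != 0 by rewrite invr_eq0; lra.
have sX : size ('X * gegen R n i.+1) = i.+3 by rewrite mulrC size_mulX // S1.
have sA : size ((2 * i + n)%:R *: ('X * gegen R n i.+1)) = i.+3
  by rewrite size_scale.
have sB : (size (- ((i.+1)%:R *: gegen R n i)) < i.+3)%N.
  by rewrite size_polyN; apply: leq_ltn_trans (size_scale_leq _ _) _; rewrite S0.
rewrite GSS size_scale // size_polyDl ?sA // lead_coefZ lead_coefDl ?sA //.
rewrite lead_coefZ (mulrC 'X) lead_coefMX L1 /Lc !pochS.
have hp : 0 < poch (2 * (n%:R / 2 - 1)) i :> R by apply: poch_gt0; lra.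
have hp' : 0 < poch (2 * (n%:R / 2 - 1)) i * (2 * (n%:R / 2 - 1) + i%:R) :> R.
  by apply: mulr_gt0 => //; have := ler0n R i; lra.
move: hp hp' hd; rewrite (natd R n hn) natA natS !exprS.
set p1 := poch _ i; set p2 := poch _ i; move=> hp hp' hd.
have hi := ler0n R i.
split => //; field. all: try lra.
Qed.

End Lead.
Section Ineq.
Variable R : realType.

Lemma Gpos (a K : R) : 1/2 <= a -> 1 <= K ->
  0 < K * (2 * a + K - 1) * (a + 2 * K + 1) * (a + K + 1)
      + 2 * a * (K + 1) ^+ 2 * (a + K - 1) * (a + K + 1)
      - (2 * a + K) * (K + 1) * (a + K - 1) * (a + 2 * K + 1).
Proof.
move=> ha hK.
have hp : 0 <= a - 1/2 by lra.
have hq : 0 <= K - 1 by lra.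
move: hp hq; set p := a - 1/2; set q := K - 1 => hp hq.
set X := (X in 0 < X).
have -> : X = (27 / 4) * (p ^+ 0 * q ^+ 0) + (18 / 1) * (p ^+ 0 * q ^+ 1) + (69 / 4) * (p ^+ 0 * q ^+ 2) + (7 / 1) * (p ^+ 0 * q ^+ 3) + (1 / 1) * (p ^+ 0 * q ^+ 4) + (45 / 2) * (p ^+ 1 * q ^+ 0) + (54 / 1) * (p ^+ 1 * q ^+ 1) + (91 / 2) * (p ^+ 1 * q ^+ 2) + (16 / 1) * (p ^+ 1 * q ^+ 3) + (2 / 1) * (p ^+ 1 * q ^+ 4) + (21 / 1) * (p ^+ 2 * q ^+ 0) + (40 / 1) * (p ^+ 2 * q ^+ 1) + (23 / 1) * (p ^+ 2 * q ^+ 2) + (4 / 1) * (p ^+ 2 * q ^+ 3) + (6 / 1) * (p ^+ 3 * q ^+ 0) + (8 / 1) * (p ^+ 3 * q ^+ 1) + (2 / 1) * (p ^+ 3 * q ^+ 2).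
 by rewrite /X /p /q; field.
have ? : 0 <= p ^+ 0 * q ^+ 0 by apply: mulr_ge0; apply: exprn_ge0.
have ? : 0 <= p ^+ 0 * q ^+ 1 by apply: mulr_ge0; apply: exprn_ge0.
have ? : 0 <= p ^+ 0 * q ^+ 2 by apply: mulr_ge0; apply: exprn_ge0.
have ? : 0 <= p ^+ 0 * q ^+ 3 by apply: mulr_ge0; apply: exprn_ge0.
have ? : 0 <= p ^+ 0 * q ^+ 4 by apply: mulr_ge0; apply: exprn_ge0.
have ? : 0 <= p ^+ 1 * q ^+ 0 by apply: mulr_ge0; apply: exprn_ge0.
have ? : 0 <= p ^+ 1 * q ^+ 1 by apply: mulr_ge0; apply: exprn_ge0.
have ? : 0 <= p ^+ 1 * q ^+ 2 by apply: mulr_ge0; apply: exprn_ge0.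
have ? : 0 <= p ^+ 1 * q ^+ 3 by apply: mulr_ge0; apply: exprn_ge0.
have ? : 0 <= p ^+ 1 * q ^+ 4 by apply: mulr_ge0; apply: exprn_ge0.
have ? : 0 <= p ^+ 2 * q ^+ 0 by apply: mulr_ge0; apply: exprn_ge0.
have ? : 0 <= p ^+ 2 * q ^+ 1 by apply: mulr_ge0; apply: exprn_ge0.
have ? : 0 <= p ^+ 2 * q ^+ 2 by apply: mulr_ge0; apply: exprn_ge0.
have ? : 0 <= p ^+ 2 * q ^+ 3 by apply: mulr_ge0; apply: exprn_ge0.
have ? : 0 <= p ^+ 3 * q ^+ 0 by apply: mulr_ge0; apply: exprn_ge0.
have ? : 0 <= p ^+ 3 * q ^+ 1 by apply: mulr_ge0; apply: exprn_ge0.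
have ? : 0 <= p ^+ 3 * q ^+ 2 by apply: mulr_ge0; apply: exprn_ge0.
lra.
Qed.

Lemma ineq (a K b c : R) : 1/2 <= a -> 1 <= K -> 0 < b -> c < 0 ->
 b * c = - ((K + 1) * K * (a + K - 1) / ((2 * a + K) * (2 * a + K - 1) * (a + K + 1))) ->
 b + c = - (2 * a * (K + 1) ^+ 2 * (a + K - 1) / ((2 * a + K) * (2 * a + K - 1) * (a + 2 * K + 1))) ->
 b < K / (2 * a + K).
Proof.
move=> ha hK hb hc hprod hsum.
have G := Gpos _ _ ha hK.
set u := K / (2 * a + K).
have hm : 0 < 2 * a + K by lra.
have hu : 0 < u by apply: divr_gt0; lra.
have e : (u - b) * (u - c) = u * u - u * (b + c) + b * c by ring.
have key : (u - b) * (u - c) =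
  K * (K * (2 * a + K - 1) * (a + 2 * K + 1) * (a + K + 1)
      + 2 * a * (K + 1) ^+ 2 * (a + K - 1) * (a + K + 1)
      - (2 * a + K) * (K + 1) * (a + K - 1) * (a + 2 * K + 1))
  / ((2 * a + K) ^+ 2 * (2 * a + K - 1) * (a + 2 * K + 1) * (a + K + 1)).
  rewrite e hsum hprod /u; field; lra.
have pos : 0 < (u - b) * (u - c).
  rewrite key; apply: divr_gt0; first by apply: mulr_gt0; lra.
  apply: mulr_gt0; last lra.
  apply: mulr_gt0; last lra.
  apply: mulr_gt0; last lra.
  by apply: exprn_gt0.
have uc : 0 < u - c by lra.
move: pos; rewrite pmulr_lgt0 //; lra.
Qed.

End Ineq.
Lemma claim (R : realType) (n : nat) (hn : (3 <= n)%N) (i : nat) :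
  (1 <= i)%N -> exists r, Good (gegen R n i) (gegen R n i.-1) r i.
Proof.
have h3 := nge3 R n hn.
elim: i => [//|i IH] _.
case: i IH => [_|j IH].
  exists (fun _ => 0); split.
  - move=> j1 j2 h1 h2; lia.
  - by move=> j _; split; lra.
  - by move=> j _; rewrite G1 /root hornerX.
  - have [_ [S1 L1]] := gegen_sl R n hn 0; rewrite S1 L1; split => //.
    exact: Lc_gt0.
  - move=> j hj; have -> : j = 0%N by lia.
    by rewrite /= G0 hornerC expr0 mul1r ltr01.
have [r Hr] := IH isT.
have hd := dpos R n hn j.
have [Hinc Hbd Hroot [HsP HlP] Halt] := Hr.
apply: (step (g := (j.+1)%:R / (j + n - 1)%:R) Hr).
- by apply: divr_gt0; rewrite ?ltr0Sn.
- move=> m hm; have /eqP r0 := Hroot m hm.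
  rewrite GSS !(hornerZ, hornerD, hornerN, hornerM, hornerX) r0 /=.
  field; lra.
- by have [[S2 _] _] := gegen_sl R n hn j.+2.
- by have [[_ ->] _] := gegen_sl R n hn j.+2; apply: Lc_gt0.
- by have [-> _] := gegen_ev1 R n hn j.+2.
- have [E _] := gegen_odd R n 1 j.+2; rewrite E.
  have [-> _] := gegen_ev1 R n hn j.+2.
  by rewrite mulr1 sign_sq ltr01.
Qed.

Theorem lemma4p11 (R : realType) (n k : nat) (b c : R) :
  (3 <= n)%N -> (1 <= k)%N ->
  let alpha : R := n%:R / 2 - 1 in
  0 < b -> c < 0 ->
  b * c = - ((k.+1)%:R * k%:R * (alpha + k%:R - 1)
             / ((2 * alpha + k%:R) * (2 * alpha + k%:R - 1) * (alpha + k%:R + 1))) ->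
  b + c = - (2 * alpha * (k.+1)%:R ^+ 2 * (alpha + k%:R - 1)
             / ((2 * alpha + k%:R) * (2 * alpha + k%:R - 1) * (alpha + (2 * k)%:R + 1))) ->
  exists s : seq R,
    [/\ size s = k.+1, uniq s,
        all (fun x => (-1 < x) && (x < 1)) s,
        all (fun x => - x \in s) s &
        gegen R n k.+1 + b *: gegen R n k.-1 =
          (poch alpha k.+1 * 2 ^+ k.+1 / poch (2 * alpha) k.+1) *:
            \prod_(x <- s) ('X - x%:P)].
Proof.
move=> hn hk alpha hb hc hprod hsum.
have h3 := nge3 R n hn.
case: k hk hprod hsum => [//|j] _ hprod hsum /=.
have [r Hr] := claim R n hn j.+1 isT.
have [Hinc Hbd Hroot [HsP HlP] Halt] := Hr.
set K : R := (j.+1)%:R.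
have hK : 1 <= K by rewrite /K ler1n.
have ha : 1/2 <= alpha by rewrite /alpha; lra.
have hprod' := hprod; have hsum' := hsum.
have e1 : ((j.+2)%:R : R) = K + 1 by rewrite /K (natS R j.+1).
have e2 : (((2 * j.+1)%:R) : R) = 2 * K by rewrite natrM.
rewrite e1 in hprod'; rewrite e1 e2 in hsum'.
have hineq := ineq R alpha K b c ha hK hb hc hprod' hsum'.
have hdK : ((j + n - 1)%:R : R) = 2 * alpha + K.
  by rewrite (natd R n hn) /K natS /alpha; field.
set N := gegen R n j.+2 + b *: gegen R n j.
have [[S2 L2] _] := gegen_sl R n hn j.+2.
have [[S0 _] _] := gegen_sl R n hn j.
have sb : (size (b *: gegen R n j) < size (gegen R n j.+2))%N.
  by apply: leq_ltn_trans (size_scale_leq _ _) _; rewrite S0 S2.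
have HsN : size N = j.+3 by rewrite /N size_polyDl.
have HlN : lead_coef N = Lc R n j.+2 by rewrite /N lead_coefDl.
have [r' Hr'] : exists r', Good N (gegen R n j.+1) r' j.+2.
  apply: (step (g := K / (2 * alpha + K) - b) Hr).
  - lra.
  - move=> m hm; have /eqP r0 := Hroot m hm.
    rewrite /N GSS !(hornerZ, hornerD, hornerN, hornerM, hornerX) r0 hdK.
    rewrite -/K; field; lra.
  - exact: HsN.
  - by rewrite HlN; apply: Lc_gt0.
  - rewrite /N hornerD (hornerZ b).
    have [-> _] := gegen_ev1 R n hn j.+2; have [-> _] := gegen_ev1 R n hn j.
    lra.
  - rewrite /N hornerD (hornerZ b).
    have [E2 _] := gegen_odd R n 1 j.+2; have [E0 _] := gegen_odd R n 1 j.
    rewrite E2 E0.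
    have [-> _] := gegen_ev1 R n hn j.+2; have [-> _] := gegen_ev1 R n hn j.
    rewrite !exprS; have := sign_sq R j; set e := (-1) ^+ j => ee.
    have -> : -1 * (-1 * e) * (-1 * (-1 * e) * 1 + b * (e * 1)) = (e * e) * (1 + b)
      by ring.
    rewrite ee; lra.
have [Hinc' Hbd' Hroot' [HsN' HlN'] _] := Hr'.
have EN := factor Hinc' Hroot' HsN'.
exists (mkseq r' j.+2); split.
- by rewrite size_mkseq.
- exact: mkseq_uniq_in.
- apply/allP => x /mapP [m]; rewrite mem_iota add0n => /andP [_ hm] ->.
  by have [? ?] := Hbd' m hm; apply/andP; split.
- apply/allP => x /mapP [m]; rewrite mem_iota add0n => /andP [_ hm] ->.
  have : root N (- r' m).
    have := Hroot' m hm; rewrite /root /N !hornerD !(hornerZ b).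
    have [E2 _] := gegen_odd R n (r' m) j.+2.
    have [E0 _] := gegen_odd R n (r' m) j.
    rewrite E2 E0 !exprS; set e := (-1) ^+ j.
    set u := (gegen R n j.+2).[r' m]; set v := (gegen R n j).[r' m].
    move=> /eqP h; apply/eqP.
    have -> : -1 * (-1 * e) * u + b * (e * v) = e * (u + b * v) by ring.
    by rewrite h mulr0.
  rewrite EN rootZ ?root_prod_XsubC //.
  by rewrite HlN; have := Lc_gt0 R n hn j.+2; rewrite lt0r => /andP[].
- by rewrite {1}EN HlN.
Qed.
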